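(* Let $k \geq 1$ be an integer, let $A : \mathbb{Z} \to V$ be an array (any function from integers to some value set $V$), let $R$ be any predicate on pairs $(v,(x_1,\ldots,x_k)) \in V \times \mathbb{Z}^k$, and let $C$ be any predicate on $\mathbb{Z}^k$. Let $a_1,\ldots,a_k, b \in \mathbb{Z}$, let $\mathit{min}_1,\ldots,\mathit{min}_k \in \mathbb{Z}$ and $\mathit{max}_k \in \mathbb{Z}$, and put $n_k = \mathit{max}_k - \mathit{min}_k$. Define $$X(x_1,\ldots,x_k) \;=\; C(x_1,\ldots,x_k) \wedge \bigwedge_{i=1}^k (\mathit{min}_i \leq x_i) \wedge x_k < \mathit{max}_k,$$ and $f(x_1,\ldots,x_k) = \sum_{i=1}^k a_i x_i + b$. Define $\mathit{off} = \sum_{i=1}^k a_i\,\mathit{min}_i + b$, and for $x \in \mathbb{Z}$ define $\mathit{base}_k(x) = |x - \mathit{off}|$ and $\mathit{base}_i(x) = \mathit{base}_{i+1}(x) \bmod a_{i+1}$ for $1 \leq i < k$. Define $$f^{-1}(x) = \big(\mathit{base}_1(x)/|a_1| + \mathit{min}_1,\ \ldots,\ \mathit{base}_k(x)/|a_k| + \mathit{min}_k\big)$$ and $$Y(x) = C(f^{-1}(x)) \wedge \mathit{base}_1(x) \bmod a_1 = 0 \wedge \big(a_1 > 0 \Rightarrow 0 \leq x - \mathit{off} < a_k n_k\big) \wedge \big(a_1 < 0 \Rightarrow a_k n_k < x - \mathit{off} \leq 0\big).$$ Assume: (1) $n_k > 0$; (2) $a_i \neq 0$ for all $1 \leq i \leq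 k$; (3) for all $1 \leq i < k$, $a_i \geq 0 \iff a_{i+1} \geq 0$; (4) for all $1 \leq i < k$ and all $(x_1,\ldots,x_k) \in \mathbb{Z}^k$ with $X(x_1,\ldots,x_k)$, $\sum_{j=1}^{i} |a_j|\,(x_j - \mathit{min}_j) < |a_{i+1}|$. Then $$\Big(\forall (x_1,\ldots,x_k) \in \mathbb{Z}^k.\ X(x_1,\ldots,x_k) \Rightarrow R\big(A[f(x_1,\ldots,x_k)],(x_1,\ldots,x_k)\big)\Big) \iff \Big(\forall x \in \mathbb{Z}.\ Y(x) \Rightarrow R\big(A[x], f^{-1}(x)\big)\Big).$$
   Context: All quantities are integers. For an integer $u \geq 0$ and a nonzero integer $a$, $u \bmod a$ denotes the remainder of $u$ modulo $|a|$, i.e. the unique $r$ with $0 \leq r < |a|$ and $u \equiv r \pmod{|a|}$, and $u/|a|$ denotes integer division discarding the remainder (note all $\mathit{base}_i(x)$ are nonnegative). $A[y]$ denotes the value of the array $A$ at index $y$. The theorem expresses that a nested quantifier over $x_1,\ldots,x_k$ indexing $A$ by a linear expression is equivalent to a single quantifier over the index $x$. *)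

(* Defs.v *)
(* Dimension k >= 1 is represented as k.+1; coordinates are
   indexed by 'I_k.+1 (paper index i corresponds to ordinal i-1). *)
From HB Require Import structures.
From mathcomp Require Import all_boot all_order all_algebra.
Set Implicit Arguments. Unset Strict Implicit. Unset Printing Implicit Defensive.
Import Order.TTheory GRing.Theory Num.Theory.
Local Open Scope ring_scope.

Section Defs.
Variables (k : nat) (a mn : {ffun 'I_k.+1 -> int}) (b mxk : int).
Variable (C : {ffun 'I_k.+1 -> int} -> Prop).

Definition nk : int := mxk - mn ord_max.

Definition Xpred (xs : {ffun 'I_k.+1 -> int}) : Prop :=
  C xs /\ (forall i, mn i <= xs i) /\ xs ord_max < mxk.

Definition flin (xs : {ffun 'I_k.+1 -> int}) : int :=
  \sum_(i < k.+1) a i * xs i + b.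

Definition off : int := \sum_(i < k.+1) a i * mn i + b.

(* base_of for 0-based index i (<= k): base_k(x) = |x - off| and
   base_i(x) = base_{i+1}(x) mod a_{i+1}, i.e. the remainder of |x-off|
   successively reduced modulo a_k, a_{k-1}, ..., a_{i+1}. *)
Definition base_of (i : nat) (x : int) : int :=
  foldr (fun j u => (u %% a (inord j))%Z) `|x - off| (iota i.+1 (k - i)).

Definition f_inv (x : int) : {ffun 'I_k.+1 -> int} :=
  [ffun i : 'I_k.+1 => (base_of i x %/ `|a i|)%Z + mn i].

Definition Ypred (x : int) : Prop :=
  C (f_inv x) /\ (base_of 0 x %% a ord0)%Z = 0 /\
  (0 < a ord0 -> 0 <= x - off < a ord_max * nk) /\
  (a ord0 < 0 -> a ord_max * nk < x - off <= 0).

End Defs.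

(* Main.v *)
Require Import Defs.
From HB Require Import structures.
From mathcomp Require Import all_boot all_order all_algebra.
From mathcomp Require Import zify.
Import Order.TTheory GRing.Theory Num.Theory.
Local Open Scope ring_scope.

Lemma base_last k (a mn : {ffun 'I_k.+1 -> int}) b x :
  base_of a mn b k x = `|x - off a mn b|.
Proof. by rewrite /base_of subnn. Qed.

Lemma base_step k (a mn : {ffun 'I_k.+1 -> int}) b x i : (i < k)%N ->
  base_of a mn b i x = (base_of a mn b i.+1 x %% a (inord i.+1))%Z.
Proof.
move=> hi; rewrite /base_of.
have -> : (k - i = (k - i.+1).+1)%N by lia.
by [].
Qed.

Lemma modz_absr m (d : int) : (m %% `|d|)%Z = (m %% d)%Z.
Proof.
case: (ltrP d 0) => hd; first by rewrite ltr0_norm // modzN.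
by rewrite ger0_norm.
Qed.

Lemma S0 k (F : 'I_k.+1 -> int) :
  \sum_(j < k.+1 | (j <= 0)%N) F j = F ord0.
Proof. by rewrite (big_pred1 ord0) // => j; rewrite leqn0. Qed.

Lemma Srec k (F : 'I_k.+1 -> int) i : (i < k)%N ->
  \sum_(j < k.+1 | (j <= i.+1)%N) F j =
  \sum_(j < k.+1 | (j <= i)%N) F j + F (inord i.+1).
Proof.
move=> hi; rewrite (bigD1 (inord i.+1)) /=; last by rewrite inordK.
rewrite addrC; congr (_ + _); apply: eq_bigl => j.
rewrite -val_eqE /= inordK; last by lia.
by apply/andP/idP => [[]|]; lia.
Qed.

Lemma Sfull k (F : 'I_k.+1 -> int) :
  \sum_(j < k.+1 | (j <= k)%N) F j = \sum_(j < k.+1) F j.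
Proof. by apply: eq_bigl => j; rewrite leq_ord. Qed.

Theorem theorem1 (k : nat) (V : Type) (A : int -> V)
  (R : V -> {ffun 'I_k.+1 -> int} -> Prop)
  (C : {ffun 'I_k.+1 -> int} -> Prop)
  (a mn : {ffun 'I_k.+1 -> int}) (b mxk : int)
  (h1 : 0 < nk mn mxk)
  (h2 : forall i : 'I_k.+1, a i != 0)
  (h3 : forall i : 'I_k,
      (0 <= a (widen_ord (leqnSn k) i)) = (0 <= a (lift ord0 i)))
  (h4 : forall (i : 'I_k) (xs : {ffun 'I_k.+1 -> int}),
      Xpred mn mxk C xs ->
      \sum_(j < k.+1 | (j <= i)%N) `|a j| * (xs j - mn j) < `|a (lift ord0 i)|) :
  (forall xs : {ffun 'I_k.+1 -> int},
      Xpred mn mxk C xs -> R (A (flin a b xs)) xs) <->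
  (forall x : int, Ypred a mn b mxk C x -> R (A x) (f_inv a mn b x)).
Proof.
have sgn : forall i : 'I_k.+1, (0 <= a i) = (0 <= a ord0).
  have H : forall n (hn : (n < k.+1)%N), (0 <= a (inord n)) = (0 <= a ord0).
    elim=> [|n IH] hn.
      by congr (_ <= a _); apply: val_inj; rewrite /= inordK.
    have hn' : (n < k)%N by [].
    have := h3 (Ordinal hn').
    have -> : widen_ord (leqnSn k) (Ordinal hn') = inord n.
      by apply: val_inj; rewrite /= inordK //; lia.
    have -> : lift ord0 (Ordinal hn') = inord n.+1.
      by apply: val_inj; rewrite /= inordK.
    by move=> <-; apply: IH; lia.
  by move=> i; rewrite -(H i (ltn_ord i)) inord_val.
have apos : 0 < a ord0 -> forall i, a i = `|a i|.
  move=> h i; rewrite ger0_norm // sgn; exact: ltW.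
have aneg : a ord0 < 0 -> forall i, a i = - `|a i|.
  move=> h i; rewrite ltr0_norm ?opprK //.
  by rewrite ltNge sgn -ltNge.
have anz : forall i, 0 < `|a i| by move=> i; rewrite normr_gt0.
have h2' : forall i, `|a i| != 0 by move=> i; rewrite normr_eq0.
have absum : forall (F : 'I_k.+1 -> int),
    (0 < a ord0 -> \sum_(j < k.+1) a j * F j = \sum_(j < k.+1) `|a j| * F j) /\
    (a ord0 < 0 -> \sum_(j < k.+1) a j * F j = - \sum_(j < k.+1) `|a j| * F j).
  move=> F; split=> h.
    by apply: eq_bigr => j _; rewrite -apos.
  rewrite -sumrN; apply: eq_bigr => j _; by rewrite {1}(aneg h) mulNr.
have a0cases : 0 < a ord0 \/ a ord0 < 0.
  by have := h2 ord0; rewrite neq_lt => /orP [] ->; auto.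
split.
-
  move=> HX x [HC [HB0 [Hp Hn]]].
  set q := fun j : 'I_k.+1 => (base_of a mn b j x %/ `|a j|)%Z.
  have Bge0 : forall i, (i <= k)%N -> 0 <= base_of a mn b i x.
    move=> i hi; case: (ltngtP i k) hi => // [hik|->] _.
      by rewrite base_step //; apply: modz_ge0.
    by rewrite base_last.
  have tele : forall i, (i <= k)%N ->
      base_of a mn b i x = \sum_(j < k.+1 | (j <= i)%N) `|a j| * q j.
    elim=> [|i IH] hi.
      rewrite S0 /q /=.
      rewrite {1}(divz_eq (base_of a mn b 0 x) `|a ord0|) modz_absr HB0.
      by rewrite addr0 mulrC.
    rewrite Srec // -IH; last by lia.
    rewrite (@base_step k a mn b x i) // /q inordK //.
    rewrite {1}(divz_eq (base_of a mn b i.+1 x) `|a (inord i.+1)|) modz_absr.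
    by rewrite addrC mulrC.
  have Hk := tele k (leqnn k); rewrite Sfull base_last in Hk.
  have Hflin : flin a b (f_inv a mn b x) = x.
    rewrite /flin.
    have -> : \sum_(i < k.+1) a i * f_inv a mn b x i =
      \sum_(i < k.+1) a i * q i + \sum_(i < k.+1) a i * mn i.
      rewrite -big_split /=; apply: eq_bigr => i _.
      by rewrite ffunE mulrDr.
    have : \sum_(i < k.+1) a i * q i = x - off a mn b.
      case: a0cases => h.
        rewrite (proj1 (absum q) h) -Hk ger0_norm //.
        by case/andP: (Hp h).
      rewrite (proj2 (absum q) h) -Hk ler0_norm ?opprK //.
      by case/andP: (Hn h).
    rewrite /off => ->; lia.
  rewrite -{1}Hflin; apply: HX.
  split; first by [].
  split.
    move=> i; rewrite ffunE lerDr divz_ge0 //; apply: Bge0; exact: leq_ord.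
  rewrite ffunE.
  have hlt : `|x - off a mn b| < `|a ord_max| * nk mn mxk.
    case: a0cases => h.
      case/andP: (Hp h) => h0 h1'; rewrite ger0_norm //.
      by rewrite -(apos h ord_max).
    case/andP: (Hn h) => h0 h1'; rewrite ler0_norm //.
    rewrite (aneg h ord_max) in h0.
    lia.
  have hq : q ord_max < nk mn mxk.
    have e := divz_eq (base_of a mn b (@ord_max k) x) `|a ord_max|.
    have r0 := @modz_ge0 (base_of a mn b (@ord_max k) x) `|a ord_max| (h2' ord_max).
    have ha := anz ord_max.
    have hk : base_of a mn b ord_max x = `|x - off a mn b| := base_last _ _ _ _ _.
    rewrite hk in e r0.
    rewrite /q hk; move: e r0 ha hlt h1.
    set m := `|x - off a mn b|; set qq := (m %/ _)%Z; set rr := (m %% _)%Z.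
    move=> e r0 ha hlt' _; nia.
  move: hq; rewrite /q /nk; lia.
-
  move=> HY xs HX.
  have [HC [Hmn Hmx]] := HX.
  set x := flin a b xs.
  set y := fun j : 'I_k.+1 => xs j - mn j.
  have yge0 : forall j, 0 <= y j by move=> j; rewrite /y subr_ge0.
  set S := fun i : nat => \sum_(j < k.+1 | (j <= i)%N) `|a j| * y j.
  have Sge0 : forall i, 0 <= S i.
    by move=> i; apply: sumr_ge0 => j _; apply: mulr_ge0.
  have Slt : forall i, (i < k)%N -> S i < `|a (inord i.+1)|.
    move=> i hi; have := h4 (Ordinal hi) xs HX.
    have -> : lift ord0 (Ordinal hi) = inord i.+1.
      by apply: val_inj; rewrite /= inordK.
    by [].
  have Sstep : forall i, (i < k)%N ->
      S i.+1 = S i + `|a (inord i.+1)| * y (inord i.+1).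
    by move=> i hi; rewrite /S Srec.
  have xoff : x - off a mn b = \sum_(j < k.+1) a j * y j.
    rewrite /x /flin /off /y.
    under [X in _ = X]eq_bigr => j _ do rewrite mulrBr.
    by rewrite sumrB opprD addrACA subrr addr0.
  have SK : S k = \sum_(j < k.+1) `|a j| * y j by rewrite /S Sfull.
  have absx : `|x - off a mn b| = S k.
    rewrite SK xoff; case: a0cases => h.
      by rewrite (proj1 (absum y) h) ger0_norm // -SK.
    by rewrite (proj2 (absum y) h) normrN ger0_norm // -SK.
  have BS : forall d, (d <= k)%N -> base_of a mn b (k - d)%N x = S (k - d)%N.
    elim=> [|d IH] hd; first by rewrite subn0 base_last.
    have hi : (k - d.+1 < k)%N by lia.
    rewrite base_step //.
    have -> : (k - d.+1).+1 = (k - d)%N by lia.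
    rewrite IH; last by lia.
    have -> : (k - d)%N = (k - d.+1).+1 by lia.
    rewrite Sstep // -modz_absr.
    have := Slt _ hi; have := Sge0 (k - d.+1)%N.
    set s := S _; set e := `|a _|; move=> ha hb.
    rewrite addrC mulrC modzMDl modz_small //.
    by rewrite ha hb.
  have B : forall i, (i <= k)%N -> base_of a mn b i x = S i.
    move=> i hi; have := BS (k - i)%N (leq_subr _ _).
    by rewrite subKn.
  have S0' : S 0%N = `|a ord0| * y ord0 by rewrite /S S0.
  have finv : f_inv a mn b x = xs.
    apply/ffunP => j; rewrite ffunE B; last exact: leq_ord.
    case: j => [[|i] hj].
      have -> : Ordinal hj = ord0 by apply: val_inj.
      by rewrite S0' mulKz ?normr_eq0 // /y subrK.
    rewrite Sstep //.
    have -> : inord i.+1 = Ordinal hj by apply: val_inj; rewrite /= inordK.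
    rewrite [S i + _]addrC [`|_| * _]mulrC divzMDl ?normr_eq0 //.
    rewrite divz_small; last first.
      rewrite Sge0 /= abszE.
      have := Slt i hj.
      have -> : inord i.+1 = Ordinal hj by apply: val_inj; rewrite /= inordK.
      by [].
    by rewrite addr0 /y subrK.
  have := HY x; rewrite finv; apply.
  split; first by rewrite finv.
  split.
    rewrite B // S0' -modz_absr mulrC.
    by rewrite modzMl.
  have hyk : y ord_max < nk mn mxk by rewrite /y /nk; lia.
  have Sk : S k < `|a ord_max| * nk mn mxk.
    have ha := anz ord_max.
    have [s /andP[hs0 hs1] ->] : exists2 s, 0 <= s < `|a ord_max| &
        S k = s + `|a ord_max| * y ord_max.
      have [k0|kpos] := posnP k.
        exists 0; first by rewrite lexx ha.
        have -> : S k = S 0%N by rewrite k0.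
        have e : ord0 = ord_max :> 'I_k.+1 by apply: val_inj; rewrite /= k0.
        by rewrite S0' e add0r.
      have kk : k = k.-1.+1 by rewrite prednK.
      have hk1 : (k.-1 < k)%N by rewrite prednK.
      exists (S k.-1); last first.
        rewrite {1}kk Sstep // prednK //.
        have -> : (inord k : 'I_k.+1) = ord_max by apply: val_inj; rewrite /= inordK.
        by [].
      have := Slt _ hk1; rewrite prednK //.
      have -> : (inord k : 'I_k.+1) = ord_max by apply: val_inj; rewrite /= inordK.
      by move=> ->; rewrite Sge0.
    have := yge0 ord_max.
    nia.
  rewrite xoff; split=> h.
    rewrite (proj1 (absum y) h) -SK (apos h ord_max) Sge0 /=; exact: Sk.
  rewrite (proj2 (absum y) h) -SK (aneg h ord_max).
  have := Sge0 k; lia.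
Qed.
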